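(* Let $B$ be a unital commutative semi-simple Banach algebra with connected maximal ideal space $X$. Let $T$ be a unital endomorphism of $B$ which is a Riesz operator, induced by a selfmap $\phi$ of $X$, and suppose $\{x_0\}=\bigcap_{n=0}^\infty\phi_n(X)$. If $x_0$ is an isolated point of $X$ in the norm topology, then there is a positive integer $N$ such that $T^Nf=\hat f(x_0)1$ for all $f\in B$.
   Context: The maximal ideal space $X$ of $B$ carries the weak-* (Gelfand) topology, and $\hat f$ denotes the Gelfand transform of $f\in B$. A unital endomorphism $T$ of $B$ is induced by a weak-* continuous selfmap $\phi$ of $X$ if $\widehat{Tf}(x)=\hat f(\phi(x))$ for all $f\in B$, $x\in X$; $\phi_n$ is the $n$-th iterate of $\phi$ ($\phi_0$ the identity). The norm topology on $X$ is that given by the metric $\|x-y\|=\sup\{|\hat f(x)-\hat f(y)|: f\in B,\ \|f\|\le 1\}$ (the norm of $B^*$). A bounded operator $T$ is a Riesz operator if $\lim_{n}\left[\inf\{\|T^n-K\|:K \text{ compact}\}\right]^{1/n}=0$. *)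

(* Defs.v *)
From HB Require Import structures.
From mathcomp Require Import all_boot all_order all_algebra.
From mathcomp Require Import all_classical all_reals all_analysis.
From mathcomp Require Import complex.
Import Order.TTheory GRing.Theory Num.Theory.
Import numFieldTopology.Exports numFieldNormedType.Exports.

Set Implicit Arguments.
Unset Strict Implicit.
Unset Printing Implicit Defensive.

Local Open Scope ring_scope.
Local Open Scope classical_set_scope.

HB.instance Definition _ (R : rcfType) := PseudoPointedMetric.copy R[i] (R[i])^o.

Section BanachAlgebra.
Variables (R : realType) (B : completeNormedModType R[i]).

Definition normB (f : B) : R := complex.Re `|f|.
Definition normC (z : R[i]) : R := complex.Re `|z|.

Definition is_unital_comm_banach_algebra (mul : B -> B -> B) (one : B) : Prop :=
  [/\ associative mul, commutative mul & left_id one mul] /\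
  [/\ (forall f g h, mul (f + g) h = mul f h + mul g h),
      (forall (a : R[i]) f g, mul (a *: f) g = a *: mul f g),
      (forall f g, normB (mul f g) <= normB f * normB g)
    & normB one = 1].

Definition is_linear_map (T : B -> B) : Prop :=
  forall (a : R[i]) f g, T (a *: f + g) = a *: T f + T g.

Definition is_character (mul : B -> B -> B) (one : B) (x : B -> R[i]) : Prop :=
  [/\ (forall (a : R[i]) f g, x (a *: f + g) = a * x f + x g),
      (forall f g, x (mul f g) = x f * x g)
    & x one = 1].

(* Maximal ideal space, as a subset of B -> C with the topology of pointwise
   convergence, i.e. the weak-* (Gelfand) topology. The Gelfand transform of f
   is  \hat f (x) = x f. *)
Definition max_ideal_space (mul : B -> B -> B) (one : B) : set {ptws B -> R[i]} :=
  [set x | is_character mul one x].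

(* semi-simple: the Jacobson radical (= kernel of the Gelfand transform) is 0 *)
Definition semisimple (mul : B -> B -> B) (one : B) : Prop :=
  forall f, (forall x, max_ideal_space mul one x -> x f = 0) -> f = 0.

Definition unital_endomorphism (mul : B -> B -> B) (one : B) (T : B -> B) : Prop :=
  [/\ is_linear_map T, (forall f g, T (mul f g) = mul (T f) (T g)) & T one = one].

Definition bounded_operator (T : B -> B) : Prop :=
  is_linear_map T /\ exists M : R, forall f, normB (T f) <= M * normB f.

Definition unit_ball : set B := [set f | normB f <= 1].

Definition compact_operator (K : B -> B) : Prop :=
  is_linear_map K /\ compact (closure (K @` unit_ball)).

Definition opnorm (A : B -> B) : R := sup [set normB (A f) | f in unit_ball].

Definition ess_norm (A : B -> B) : R :=
  inf [set opnorm (fun f => A f - K f) | K in compact_operator].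

Definition riesz_operator (T : B -> B) : Prop :=
  bounded_operator T /\
  (fun n : nat => ess_norm (iter n T) `^ (n%:R^-1)) @ \oo --> (0 : R).

Definition induced_by (mul : B -> B -> B) (one : B) (T : B -> B)
    (phi : {ptws B -> R[i]} -> {ptws B -> R[i]}) : Prop :=
  let X := max_ideal_space mul one in
  [/\ phi @` X `<=` X, {within X, continuous phi}
    & forall f x, X x -> x (T f) = phi x f].

(* the norm (B^* ) metric on X *)
Definition char_dist (x y : B -> R[i]) : R :=
  sup [set normC (x f - y f) | f in unit_ball].

Definition norm_isolated (X : set {ptws B -> R[i]}) (x0 : {ptws B -> R[i]}) : Prop :=
  exists2 e : R, 0 < e & forall y, X y -> char_dist x0 y < e -> y = x0.

End BanachAlgebra.

(* Main.v *)
Require Import Defs.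
From HB Require Import structures.
From mathcomp Require Import all_boot all_order all_algebra.
From mathcomp Require Import all_classical all_reals all_analysis.
From mathcomp Require Import complex.
From mathcomp Require Import ring lra.
Import Order.TTheory GRing.Theory Num.Theory.
Import numFieldTopology.Exports numFieldNormedType.Exports.
Local Open Scope ring_scope.
Local Open Scope classical_set_scope.

Lemma open_nbhs_set (T : topologicalType) (P : set T) : open [set y | nbhs y P].
Proof.
rewrite openE => y /= /nbhs_interior; apply: filterS => z.
by rewrite /interior.
Qed.

Lemma clopen_conn (T : topologicalType) (S A : set T) : connected S -> A `<=` S -> A !=set0 ->
 (forall y, A y -> nbhs y (fun z => S z -> A z)) ->
 (forall y, S y -> ~ A y -> nbhs y (fun z => S z -> ~ A z)) -> A = S.
Proof.
move=> hc AS A0 hA hB; apply: hc => //.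
- exists [set y | nbhs y (fun z => S z -> A z)]; first exact: open_nbhs_set.
  apply/seteqP; split => y.
    by move=> Ay; split; [exact: AS | exact: hA].
  by move=> [Sy /nbhs_singleton]; apply.
- exists (~` [set y | nbhs y (fun z => S z -> ~ A z)]).
    by rewrite closedC; exact: open_nbhs_set.
  apply/seteqP; split => y.
    by move=> Ay; split; [exact: AS | move=> /nbhs_singleton /(_ (AS _ Ay))].
  move=> [Sy nN]; have [//|nA] := pselect (A y).
  by exfalso; apply: nN; exact: hB.
Qed.

Section S.
Variables (R : realType) (B : completeNormedModType R[i]).


Lemma ge0C (w : R[i]) : 0 <= w -> w = (complex.Re w)%:C%C.
Proof. by case: w => a b; rewrite lecE /= => /andP[/eqP -> _]. Qed.

Lemma normB_ge0 (f : B) : 0 <= normB f.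
Proof. by have := normr_ge0 f; rewrite lecE => /andP[]. Qed.

Lemma normBE (f : B) : `|f| = (normB f)%:C%C.
Proof. exact/ge0C/normr_ge0. Qed.

Lemma normB_add (f g : B) : normB (f + g) <= normB f + normB g.
Proof. by have := ler_normD f g; rewrite !normBE -rmorphD lecR. Qed.

Lemma normB_N (f : B) : normB (- f) = normB f.
Proof. by rewrite /normB normrN. Qed.

Lemma normCE (z : R[i]) : `|z| = (normC z)%:C%C.
Proof. exact/ge0C/normr_ge0. Qed.

Lemma normB_Z (a : R[i]) (f : B) : normB (a *: f) = normC a * normB f.
Proof. by rewrite {1}/normB normrZ normCE normBE -rmorphM. Qed.

Lemma normC_add (a b : R[i]) : normC (a + b) <= normC a + normC b.
Proof. by have := ler_normD a b; rewrite !normCE -rmorphD lecR. Qed.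

Lemma normC_M (a b : R[i]) : normC (a * b) = normC a * normC b.
Proof. by rewrite {1}/normC normrM !normCE -rmorphM. Qed.

Lemma normC_ge0 (a : R[i]) : 0 <= normC a.
Proof. by have := normr_ge0 a; rewrite normCE lecR. Qed.

Lemma normC_N (a : R[i]) : normC (- a) = normC a.
Proof. by rewrite /normC normrN. Qed.

Lemma normC1 : normC (1 : R[i]) = 1.
Proof. by rewrite /normC normr1. Qed.

Lemma normC_eq0 (a : R[i]) : normC a = 0 -> a = 0.
Proof. by move=> h; apply/normr0_eq0; rewrite normCE h. Qed.

Lemma normB_eq0 (f : B) : normB f = 0 -> f = 0.
Proof. by move=> h; apply/normr0_eq0; rewrite normBE h. Qed.


Variables (mul : B -> B -> B) (one : B).
Hypothesis HB : is_unital_comm_banach_algebra mul one.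

Lemma mulDl f g h : mul (f + g) h = mul f h + mul g h.
Proof. by case: HB => _ []. Qed.
Lemma mulC : commutative mul.
Proof. by case: HB => [[]]. Qed.
Lemma mulZl a f g : mul (a *: f) g = a *: mul f g.
Proof. by case: HB => _ []. Qed.
Lemma normM f g : normB (mul f g) <= normB f * normB g.
Proof. by case: HB => _ []. Qed.
Lemma mulDr f g h : mul f (g + h) = mul f g + mul f h.
Proof. by rewrite mulC mulDl !(mulC f). Qed.
Lemma mulr0' f : mul f 0 = 0.
Proof. by apply: (@addrI _ (mul f 0)); rewrite -mulDr !addr0. Qed.
Lemma mulBr f g h : mul f (g - h) = mul f g - mul f h.
Proof.
rewrite mulDr; congr (_ + _).
by rewrite mulC -scaleN1r mulZl scaleN1r mulC.
Qed.
Lemma one_neq0 : one <> 0.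
Proof. by move=> e; case: HB => _ [_ _ _]; rewrite e /normB normr0 /=; move/eqP; rewrite eq_sym oner_eq0. Qed.


Lemma ltC_pos (r : R) (eps : R[i]) : 0 < eps -> ((r%:C)%C < eps) = (r < complex.Re eps).
Proof.
move=> e0; have /andP[/eqP ie _] : (complex.Im eps == complex.Im 0) && (complex.Re 0 < complex.Re eps) by rewrite -ltcE.
by rewrite ltcE /= ie eqxx.
Qed.

Lemma mul_cvg f (s : nat -> B) l : s @ \oo --> l -> (fun n => mul f (s n)) @ \oo --> mul f l.
Proof.
move=> /cvgrPdist_lt hs; apply/cvgrPdist_lt => eps e0.
set e := complex.Re eps.
have ep : 0 < e by move: e0; rewrite ltcE => /andP[].
set nf := normB f.
have nf0 : 0 <= nf := normB_ge0 f.
have e'0 : 0 < e / (nf + 1) by rewrite divr_gt0 // ltr_wpDl.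
have : 0 < ((e / (nf + 1))%:C)%C by rewrite ltcR.
move=> /hs; apply: filterS => n.
rewrite normBE ltC_pos ?ltcR // => h.
rewrite -mulBr normBE ltC_pos //.
apply: (le_lt_trans (normM _ _)).
rewrite -/nf.
apply: (le_lt_trans (ler_wpM2l nf0 (ltW h))).
rewrite mulrA ltr_pdivrMr ?ltr_wpDl // mulrC ltr_pM2l //.
by rewrite ltrDl.
Qed.


Lemma neumann f : normB f < 1 -> exists g, g = f + mul f g.
Proof.
move=> f1.
set r := normB f.
have r0 : 0 <= r := normB_ge0 f.
pose u k := iter k (mul f) f.
have hu : forall k, normB (u k) <= r ^+ k.+1.
  elim=> [|k ih]; first by rewrite expr1.
  rewrite /u iterS -/(u k) exprS.
  apply: (le_trans (normM _ _)); exact: ler_wpM2l.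
have hcv : cvgn (series (fun k => normB (u k))).
  apply: (@series_le_cvg _ _ (geometric r r)).
  - by move=> k; exact: normB_ge0.
  - by move=> k; rewrite /geometric /= mulr_ge0 // exprn_ge0.
  - by move=> k; rewrite /geometric /= -exprS.
  - by apply: is_cvg_geometric_series; rewrite ger0_norm.
have hcB : cvgn (series u).
  apply/cauchy_cvgP/cauchy_seriesP => eps e0.
  have ep : 0 < complex.Re eps.
    by have /andP[_ ] : (complex.Im eps == complex.Im 0) && (complex.Re 0 < complex.Re eps) by rewrite -ltcE.
  have hc : cauchy (series (fun k => normB (u k)) @ \oo) by apply/cauchy_cvgP.
  move/cauchy_seriesP: hc => /(_ _ ep); apply: filterS => n.
  rewrite ger0_norm; last by apply: sumr_ge0 => k _; exact: normB_ge0.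
  move=> h; apply: le_lt_trans (ler_norm_sum _ _ _) _.
  under eq_bigr do rewrite normBE.
  by rewrite -rmorph_sum ltC_pos.
set g := limn (series u).
have eq n : series u n.+1 = f + mul f (series u n).
  elim: n => [|n ih].
    have s0 : series u 0 = 0 by rewrite /series /= big_mkord big_ord0.
    by rewrite seriesSr s0 add0r mulr0' addr0.
  rewrite seriesSr; have -> : u n.+1 = mul f (u n) by [].
  by rewrite [in LHS]ih -addrA -mulDr -seriesSr.
exists g.
have h1 : (fun n => series u n.+1) @ \oo --> g by rewrite cvg_shiftS.
have h2 : (fun n => series u n.+1) @ \oo --> f + mul f g.
  under eq_fun do rewrite eq.
  by apply: cvgD; [exact: cvg_cst | exact: mul_cvg].
exact: (cvg_unique _ h1 h2).
Qed.


Section Char.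
Variable x : B -> R[i].
Hypothesis hx : is_character mul one x.

Lemma chL a f g : x (a *: f + g) = a * x f + x g.
Proof. by case: hx. Qed.
Lemma chD f g : x (f + g) = x f + x g.
Proof. by rewrite -[f]scale1r chL mul1r scale1r. Qed.
Lemma ch0 : x 0 = 0.
Proof. by apply: (@addrI _ (x 0)); rewrite -chD !addr0. Qed.
Lemma chZ a f : x (a *: f) = a * x f.
Proof. by rewrite -[a *: f]addr0 chL ch0 addr0. Qed.
Lemma chB f g : x (f - g) = x f - x g.
Proof. by rewrite -scaleN1r chD chZ mulN1r. Qed.
Lemma chM f g : x (mul f g) = x f * x g.
Proof. by case: hx. Qed.
Lemma ch1 : x one = 1.
Proof. by case: hx. Qed.

Lemma ch_bound f : normC (x f) <= normB f.
Proof.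
rewrite leNgt; apply/negP => hlt.
set l := x f in hlt *.
have l0 : l != 0.
  apply/eqP => e; move: hlt; rewrite e /normC normr0 /= ltNge.
  by rewrite normB_ge0.
have nl : 0 < normC l by rewrite lt_neqAle normC_ge0 andbT eq_sym; apply/eqP => /normC_eq0/eqP; apply/negP.
set h := l^-1 *: f.
have nh : normB h < 1.
  rewrite /h normB_Z.
  have -> : normC l^-1 = (normC l)^-1.
    by rewrite {1}/normC normrV ?unitfE // normCE -fmorphV.
  by rewrite mulrC ltr_pdivrMr // mul1r.
have xh : x h = 1 by rewrite /h chZ mulVf.
have [g eg] := @neumann h nh.
have : x g = x h + x h * x g by rewrite {1}eg chD chM.
rewrite xh mul1r => e.
have : (1 : R[i]) = 0 by apply: (@addIr _ (x g)); rewrite add0r -e.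
by move/eqP; rewrite oner_eq0.
Qed.

End Char.


Lemma near_eval (x : {ptws B -> R[i]}) g (r : R) : 0 < r ->
  \forall y \near x, normC (y g - x g) < r.
Proof.
move=> r0.
have h : {ptws, nbhs x --> x} by [].
move/(pointwise_cvgP _ _).1: h => /(_ g) h.
have := (iffLR (@cvgrPdist_lt _ (R[i]^o) _ _ _ (fun y : {ptws B -> R[i]} => y g) (x g)) h).
have : (0 : R[i]) < (r%:C)%C by rewrite ltcR.
move=> /[swap] /[apply]; apply: filterS => y.
by rewrite -normrN opprB normCE ltcR.
Qed.

Lemma near_B (g : B) (r : R) : 0 < r -> \forall g' \near g, normB (g' - g) < r.
Proof.
move=> r0.
have h : (id : B -> B) @ nbhs g --> g by [].
move/cvgrPdist_lt: h.
have : (0 : R[i]) < (r%:C)%C by rewrite ltcR.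
move=> /[swap] /[apply]; apply: filterS => y.
by rewrite -normrN opprB normBE ltcR.
Qed.


Lemma unif_near (C : set B) (x : {ptws B -> R[i]}) (d : R) :
  compact C -> is_character mul one x -> 0 < d ->
  \forall y \near x, is_character mul one y -> forall g, C g -> normC (y g - x g) < d.
Proof.
move=> cC hx d0.
have d3 : 0 < d / 3 by rewrite divr_gt0.
have cov : forall g, C g -> \forall g' \near g & y \near nbhs x,
    (fun y g => is_character mul one y -> normC (y g - x g) < d) y g'.
  move=> g Cg.
  exists ([set g' | normB (g' - g) < d / 3], [set y | normC (y g - x g) < d / 3]).
    by split; [exact: near_B | exact: near_eval].
  case=> g' y [/= h1 h2] hy.
  have -> : y g' - x g' = y (g' - g) + (y g - x g) + x (g - g').
    by rewrite (@chB _ hy) (@chB _ hx); ring.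
  apply: (le_lt_trans (normC_add _ _)).
  apply: (@lt_le_trans _ _ (d / 3 + d / 3 + d / 3)); last first.
    lra.
  rewrite ltrD //.
    apply: (le_lt_trans (normC_add _ _)); rewrite ltrD //.
    exact: (le_lt_trans (@ch_bound _ hy _)).
  apply: (le_lt_trans (@ch_bound _ hx (g - g'))).
  by rewrite -normB_N opprB.
have := (compact_near_coveringP C).1 cC {ptws B -> R[i]} (nbhs x) _ _ cov.
move=> /(_ (nbhs_filter _)) H; apply: (filterS _ H) => y h hy g Cg; exact: h g Cg hy.
Qed.


Lemma compact_bnd (C : set B) : compact C -> exists M : R, forall g, C g -> normB g <= M.
Proof.
move=> cC.
have cov : forall g, C g -> \forall g' \near g & M \near (pinfty_nbhs R),
    (fun (M : R) g => normB g < M) M g'.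
  move=> g Cg.
  exists ([set g' | normB (g' - g) < 1], [set M | normB g + 1 < M]).
    split; first exact: near_B.
    by apply: nbhs_pinfty_gt; rewrite num_real.
  case=> g' M [/= h1 h2].
  apply: (le_lt_trans _ h2).
  have -> : g' = g + (g' - g) by rewrite addrC subrK.
  apply: (le_trans (normB_add _ _)).
  by rewrite lerD // ltW.
have := (compact_near_coveringP C).1 cC R (pinfty_nbhs R) _ _ cov.
move=> H.
have [M hM] := filter_ex (H _).
by exists M => g Cg; apply/ltW/hM.
Qed.


Lemma opnorm_ge0 (A : B -> B) : 0 <= opnorm A.
Proof.
rewrite /opnorm; have [hs|hs] := pselect (has_sup [set normB (A f) | f in @unit_ball R B]).
  apply: (le_trans (normB_ge0 (A 0))); apply: sup_upper_bound => //.
  exists 0 => //; rewrite /unit_ball /= /normB normr0 /=; exact: ler01.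
by rewrite sup_out.
Qed.

Lemma zero_compact : @compact_operator R B (fun _ : B => 0).
Proof.
split; first by move=> a f g; rewrite scaler0 addr0.
have -> : (fun _ : B => (0 : B)) @` @unit_ball R B = [set 0].
  apply/seteqP; split => [_ [f _ <-] //| _ ->]; exists 0 => //.
  rewrite /unit_ball /= /normB normr0 /=; exact: ler01.
have cl : closed [set (0 : B)] := compact_closed (@norm_hausdorff _ B) (@compact_set1 B 0).
by rewrite -(proj1 (closure_id _) cl); exact: compact_set1.
Qed.

Lemma ess_lt (A : B -> B) c : ess_norm A < c ->
  exists2 K, @compact_operator R B K & opnorm (fun f => A f - K f) < c.
Proof.
move=> h.
set S := [set opnorm (fun f => A f - K f) | K in @compact_operator R B].
have hi : has_inf S.
  split; first by exists (opnorm (fun f => A f - 0)); exists (fun _ => 0) => //; exact: zero_compact.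
  by exists 0 => _ [K _ <-]; exact: opnorm_ge0.
have hp : 0 < c - ess_norm A by rewrite subr_gt0.
have [s [K hK <-] hs] := inf_adherent hp hi.
exists K => //; move: hs; rewrite /ess_norm -/S addrC subrK //.
Qed.


Lemma ub0 : @unit_ball R B 0.
Proof. rewrite /unit_ball /= /normB normr0 /=; exact: ler01. Qed.

Lemma main_lemma (T : B -> B) (phi : {ptws B -> R[i]} -> {ptws B -> R[i]})
    (x0 : {ptws B -> R[i]}) :
  semisimple mul one ->
  connected (max_ideal_space mul one) ->
  riesz_operator T ->
  induced_by mul one T phi ->
  \bigcap_n (iter n phi @` max_ideal_space mul one) = [set x0] ->
  norm_isolated (max_ideal_space mul one) x0 ->
  exists2 N : nat, (0 < N)%N & forall f : B, iter N T f = x0 f *: one.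
Proof.
move=> Hss Hconn [[_ [M hM]] hcv] [phiX _ hTphi] Hcap [e e0 hiso].
set X := max_ideal_space mul one in Hss Hconn phiX hTphi Hcap hiso.
have phiX' : forall y, X y -> X (phi y) by move=> y hy; apply: phiX; exists y.
have iterX : forall n y, X y -> X (iter n phi y).
  by elim=> [//|n ih] y hy /=; apply: phiX'; exact: ih.
have iterE : forall n y, X y -> forall f, iter n phi y f = y (iter n T f).
  elim=> [//|n ih] y hy f.
  rewrite iterS -hTphi; last exact: iterX.
  by rewrite ih // iterSr.
have hx0 : forall n, (iter n phi @` X) x0.
  by move=> n; have : [set x0] x0 by []; rewrite -Hcap => /(_ n Logic.I).
have x0X : X x0 by have [y hy <-] := hx0 0%N.
have phix0 : phi x0 = x0.
  have : (\bigcap_n (iter n phi @` X)) (phi x0).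
    move=> n _; have [y hy ey] := hx0 n; exists (phi y); first exact: phiX'.
    by rewrite -iterSr iterS ey.
  by rewrite Hcap.
have x0T : forall n f, x0 (iter n T f) = x0 f.
  by move=> n f; rewrite -iterE // iter_fix.
set c := Num.min (e / 4) (2^-1).
have c0 : 0 < c by rewrite lt_min divr_gt0 //= invr_gt0.
have c1 : c <= 1 by rewrite ge_min; apply/orP; right; rewrite invf_le1 // ler1n.
have ce : c <= e / 4 by rewrite ge_min lexx.
have h1 := nbhs_infty_gt 0.
have h2 : \forall k \near \oo, ess_norm (iter k T) `^ (k%:R^-1) < c.
  move/cvgrPdist_lt: hcv => /(_ c c0); apply: filterS => k.
  by rewrite sub0r normrN; apply: le_lt_trans; exact: ler_norm.
have [n [n0 hn]] := filter_ex (filterI h1 h2).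
have hess : ess_norm (iter n T) < c.
  rewrite ltNge; apply/negP => hge.
  have : c <= ess_norm (iter n T) `^ (n%:R^-1).
    apply: (le_trans (@ger1_powR _ c (n%:R^-1) _ _)).
    - by rewrite c0 c1.
    - by rewrite invf_le1 ?ler1n // ltr0n.
    apply: ge0_ler_powR => //; rewrite ?nnegrE ?invr_ge0 //; [exact: ltW | exact: (le_trans (ltW c0))].
  by rewrite leNgt hn.
have [K [_ cK] hE] := @ess_lt _ _ hess.
set C := closure (K @` @unit_ball R B) in cK.
have [M2 hM2] := @compact_bnd _ cK.
set E := fun f => iter n T f - K f in hE.
have hTb : forall k f, normB (iter k T f) <= `|M| ^+ k * normB f.
  elim=> [|k ih] f; first by rewrite expr0 mul1r.
  rewrite iterS exprS -mulrA; apply: (le_trans (hM _)).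
  apply: (le_trans (ler_wpM2r (normB_ge0 _) (ler_norm M))).
  by apply: ler_wpM2l => //; exact: ih.
have KC : forall g, unit_ball g -> C (K g).
  by move=> g hg; apply: subset_closure; exists g.
have hEb : forall f, unit_ball f -> normB (E f) <= opnorm E.
  move=> f hf; apply: sup_upper_bound; last by exists f.
  split; first by exists (normB (E 0)), 0 => //; exact: ub0.
  exists (`|M| ^+ n + M2) => _ [g hg <-].
  apply: (le_trans (normB_add _ _)); rewrite normB_N.
  apply: lerD; last exact/hM2/KC.
  apply: (le_trans (hTb n g)).
  by rewrite -[X in _ <= X]mulr1; apply: ler_wpM2l => //; exact: exprn_ge0.
set A := [set y | X y /\ forall f, y (iter n T f) = x0 f].
have AX : A = X.
  apply: clopen_conn => //.
  - by move=> y [].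
  - by exists x0; split => // f; exact: x0T.
  - move=> y [Xy Ay].
    have e4 : 0 < e / 4 by rewrite divr_gt0.
    have := @unif_near _ y _ cK Xy e4.
    move=> H; apply: (@filterS _ _ (nbhs_filter y) _ _ _ H) => z hz Xz; split; first exact: Xz.
    move=> f.
    set w := iter n phi z.
    have Xw : X w := iterX n z Xz.
    have -> : z (iter n T f) = w f by rewrite /w iterE.
    suff -> : w = x0 by [].
    apply: (hiso w Xw).
    have hs : sup [set normC (x0 f - w f) | f in @unit_ball R B] <= e / 4 + (e / 4 + e / 4).
      apply: ge_sup; first by exists (normC (x0 0 - w 0)), 0 => //; exact: ub0.
      move=> _ [g hg <-].
      rewrite -(Ay g) /w iterE //.
      have -> : iter n T g = K g + E g by rewrite /E addrC subrK.
      rewrite (@chD _ Xy) (@chD _ Xz).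
      have -> : y (K g) + y (E g) - (z (K g) + z (E g)) = (y (K g) - z (K g)) + (y (E g) - z (E g)) by ring.
      apply: (le_trans (normC_add _ _)); apply: lerD.
        by rewrite -normC_N opprB; apply/ltW/hz => //; exact: KC.
      apply: (le_trans (normC_add _ _)); rewrite normC_N.
      have hEg : normB (E g) <= e / 4 by apply: (le_trans (hEb g hg)); exact: (le_trans (ltW hE)).
      by apply: lerD; [exact: (le_trans (@ch_bound _ Xy (E g)) hEg) | exact: (le_trans (@ch_bound _ Xz (E g)) hEg)].
    rewrite /char_dist; apply: (le_lt_trans hs); lra.
  - move=> y Xy nAy.
    have [f hf] : exists f, y (iter n T f) <> x0 f.
      apply: contrapT => hnot; apply: nAy; split; first exact: Xy.
      by move=> f; apply: contrapT => h; apply: hnot; exists f.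
    set r := normC (y (iter n T f) - x0 f).
    have r0 : 0 < r.
      rewrite lt_neqAle normC_ge0 andbT eq_sym; apply/eqP => /normC_eq0 /eqP.
      by rewrite subr_eq0 => /eqP.
    have H := @near_eval y (iter n T f) r r0.
    apply: (@filterS _ _ (nbhs_filter y) _ _ _ H) => z hz Xz [_ Az]; move: hz.
    by rewrite Az -normC_N opprB ltxx.
exists n => // f.
apply/eqP; rewrite -subr_eq0; apply/eqP; apply: Hss => x Xx.
rewrite (@chB _ Xx) (@chZ _ Xx) (@ch1 _ Xx) mulr1.
have [_ ->] : A x by rewrite AX.
by rewrite subrr.
Qed.

End S.

Theorem corollary1p3 (R : realType) (B : completeNormedModType R[i])
    (mul : B -> B -> B) (one : B)
    (T : B -> B) (phi : {ptws B -> R[i]} -> {ptws B -> R[i]})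
    (x0 : {ptws B -> R[i]}) :
  is_unital_comm_banach_algebra mul one ->
  semisimple mul one ->
  connected (max_ideal_space mul one) ->
  unital_endomorphism mul one T ->
  riesz_operator T ->
  induced_by mul one T phi ->
  \bigcap_n (iter n phi @` max_ideal_space mul one) = [set x0] ->
  norm_isolated (max_ideal_space mul one) x0 ->
  exists2 N : nat, (0 < N)%N & forall f : B, iter N T f = x0 f *: one.
Proof.
move=> HB Hss Hconn _ Hr Hind Hcap Hiso.
exact: (@main_lemma R B mul one HB T phi x0 Hss Hconn Hr Hind Hcap Hiso).
Qed.
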